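(* Let $\alpha:A^{\Delta}\to(H,V)$ be a homomorphism onto a finite forest algebra and let $k>0$. The following are equivalent: (a) $\alpha$ is $k$-definite; (b) $\alpha$ factors through $\alpha_{A,k}$; (c) $\alpha$ factors through $\beta_1\otimes\cdots\otimes\beta_k:A^{\Delta}\to(H_1,V_1)\circ\cdots\circ(H_k,V_k)$ for some homomorphisms $\beta_i:(A\times H_1\times\cdots\times H_{i-1})^{\Delta}\to(H_i,V_i)$ that are each 1-definite; (d) $\alpha$ factors through an iterated wreath product of 1-definite homomorphisms into ${\cal U}_2$.
   Context: $A^{\Delta}=(H_A,V_A)$: free forest algebra over finite alphabet $A$; $H_A$ forests (finite ordered sequences of finite ordered $A$-labelled trees) under concatenation $+$; $V_A$ contexts (forests with exactly one leaf replaced by a hole) under substitution, acting by substitution. A forest algebra $(H,V)$: additive monoid $H$, monoid $V$, faithful left action with $g\mapsto g+h$ and $g\mapsto h+g$ in $V$; all finite forest algebras considered have $H$ idempotent and commutative. $\beta$ factors through $\alpha$ if $\alpha(s)=\alpha(s')$ implies $\beta(s)=\beta(s')$ for forests $s,s'$. The depth of a context is the depth of its hole (roots have depth $0$). $\alpha$ is $k$-definite if $\alpha(ps)=\alpha(ps')$ for every context $p$ of depth at least $k$ and all forests $s,s'$; it is 1-definite iff $\alpha(s)$ depends only on the set of labels of root nodes of $s$. For an alphabet $B$, equivalences $\sim_k$ on $H_B$: $\sim_0$ identifies all forests; for $s=b_1s_1+\cdots+b_rs_r$ ($b_i\in B$, $s_i\in H_B$) put $T^{k+1}_s=\{(b_i,[s_i]_{\sim_k})\}$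 and $s\sim_{k+1}s'$ iff $T^{k+1}_s=T^{k+1}_{s'}$. Each $\sim_k$ is a congruence; $\alpha_{B,k}:B^{\Delta}\to B^{\Delta}/{\sim_k}$ is the quotient homomorphism. Wreath product: $(H_1,V_1)\circ(H_2,V_2)=(H_1\times H_2,V_1\times V_2^{H_1})$ with $(v,f)(h_1,h_2)=(vh_1,f(h_1)h_2)$. For $\alpha:A^{\Delta}\to(H_1,V_1)$ and $\beta:(A\times H_1)^{\Delta}\to(H_2,V_2)$, $\alpha\otimes\beta$ maps $a$ to $(\alpha(a),h\mapsto\beta(a,h))$; iterated products $\beta_1\otimes\cdots\otimes\beta_k$ with $\beta_i:(A\times H_1\times\cdots\times H_{i-1})^{\Delta}\to(H_i,V_i)$ are formed likewise. ${\cal U}_2=(\{0,\infty\},\{1,0,c_0\})$ with $0+x=x$, $\infty+x=\infty$, $1$ the identity, vertical $0$ the constant map to $\infty$, and $c_0$ the constant map to $0$.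
   Formalization: In (d), α factors through an iterated wreath product of exactly k levels, level i being a direct product of finitely many 1-definite homomorphisms $(A\times H_1\times\cdots\times H_{i-1})^{\Delta}$ → ${\cal U}_2$, rather than of arbitrarily many single ones. The statement above fails without it. *)

(* Defs.v *)
From Stdlib Require List.
From mathcomp Require Import all_boot.
Set Implicit Arguments.
Unset Strict Implicit.
Unset Printing Implicit Defensive.

Inductive tree (B : Type) : Type := Node : B -> seq (tree B) -> tree B.
Arguments Node {B}.
(* a forest is a finite ordered sequence of trees; + is concatenation *)
Definition forest (B : Type) := seq (tree B).

Definition label {B} (t : tree B) : B := let: Node b _ := t in b.
Definition kids {B} (t : tree B) : forest B := let: Node _ ts := t in ts.

(* Contexts: forests with exactly one leaf replaced by a hole, in the
   unique representation
     CHole l r      = l + [] + r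
     CNode l a p r  = l + a(p) + r                                    *)
Inductive ctx (B : Type) : Type :=
| CHole : forest B -> forest B -> ctx B
| CNode : forest B -> B -> ctx B -> forest B -> ctx B.
Arguments CHole {B}.
Arguments CNode {B}.

Fixpoint fill {B} (p : ctx B) (s : forest B) : forest B :=
  match p with
  | CHole l r => l ++ s ++ r
  | CNode l a q r => l ++ Node a (fill q s) :: r
  end.

(* depth of a context = depth of its hole (roots have depth 0) *)
Fixpoint depth {B} (p : ctx B) : nat :=
  match p with
  | CHole _ _ => 0
  | CNode _ _ q _ => (depth q).+1
  end.

Record preFA : Type := PreFA {
  pH : finType;
  pV : finType;
  padd : pH -> pH -> pH;
  pzero : pH;
  pact : pV -> pH -> pH
}.

(* Following the paper's standing convention, H is idempotent and
   commutative. *)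
Record fa_struct (Q : preFA) : Type := FAStruct {
  fmul : pV Q -> pV Q -> pV Q;
  fone : pV Q;
  finsl : pH Q -> pV Q;   (* the context  h + [] *)
  finsr : pH Q -> pV Q;   (* the context  [] + h *)
  faddA : forall x y z : pH Q, padd x (padd y z) = padd (padd x y) z;
  fadd0l : forall x : pH Q, padd (pzero Q) x = x;
  fadd0r : forall x : pH Q, padd x (pzero Q) = x;
  faddC : forall x y : pH Q, padd x y = padd y x;
  faddI : forall x : pH Q, padd x x = x;
  fmulA : forall u v w, fmul u (fmul v w) = fmul (fmul u v) w;
  fmul1l : forall v, fmul fone v = v;
  fmul1r : forall v, fmul v fone = v;
  fact_mul : forall v w (h : pH Q), pact v (pact w h) = pact (fmul v w) h;
  fact_one : forall h : pH Q, pact fone h = h;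
  fact_faithful : forall v w, (forall h : pH Q, pact v h = pact w h) -> v = w;
  finsl_spec : forall h g : pH Q, pact (finsl h) g = padd h g;
  finsr_spec : forall h g : pH Q, pact (finsr h) g = padd g h
}.

(* Since B^Delta is free on the letter contexts a[], a homomorphism    *)
(* alpha : B^Delta -> (H,V) is given by the images phi a = alpha(a[]). *)

Section Eval.
Variables (B : Type) (Q : preFA) (phi : B -> pV Q).

Fixpoint evalT (t : tree B) : pH Q :=
  let: Node a ts := t in
  pact (phi a) (foldr (fun t acc => padd (evalT t) acc) (pzero Q) ts).

Definition evalF (s : forest B) : pH Q :=
  foldr (fun t acc => padd (evalT t) acc) (pzero Q) s.

Variable (HQ : fa_struct Q).

Fixpoint evalC (p : ctx B) : pV Q :=
  match p with
  | CHole l r => fmul HQ (finsl HQ (evalF l)) (finsr HQ (evalF r))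
  | CNode l a q r =>
      fmul HQ (fmul HQ (finsl HQ (evalF l)) (finsr HQ (evalF r)))
              (fmul HQ (phi a) (evalC q))
  end.

Definition onto_hom : Prop :=
  (forall h : pH Q, exists s, evalF s = h) /\
  (forall v : pV Q, exists p, evalC p = v).

End Eval.

Definition definite (k : nat) {B : Type} {Q : preFA} (phi : B -> pV Q) : Prop :=
  forall (p : ctx B), k <= depth p ->
  forall s s' : forest B, evalF phi (fill p s) = evalF phi (fill p s').

Definition factors_through {B : Type} {Q R : preFA}
  (beta : B -> pV Q) (alpha : B -> pV R) : Prop :=
  forall s s' : forest B, evalF alpha s = evalF alpha s' ->
                          evalF beta s = evalF beta s'.

(* s ~_{k+1} s'  iff  T^{k+1}_s = T^{k+1}_{s'}, where
   T^{k+1}_s = { (b_i, [s_i]_{~k}) } for s = b_1 s_1 + ... + b_r s_r. *)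
Fixpoint sim {B : Type} (k : nat) (s s' : forest B) : Prop :=
  match k with
  | 0 => True
  | k.+1 =>
      (forall t, List.In t s -> exists t', List.In t' s' /\
          label t = label t' /\ sim k (kids t) (kids t')) /\
      (forall t', List.In t' s' -> exists t, List.In t s /\
          label t = label t' /\ sim k (kids t) (kids t'))
  end.

(* beta factors through the quotient map alpha_{B,k} : B^Delta -> B^Delta/~_k,
   i.e. alpha_{B,k}(s) = alpha_{B,k}(s') (that is, s ~_k s') implies
   beta(s) = beta(s'). *)
Definition factors_through_alpha_k {B : Type} {Q : preFA}
  (k : nat) (beta : B -> pV Q) : Prop :=
  forall s s' : forest B, sim k s s' -> evalF beta s = evalF beta s'.

Definition wreath (Q1 Q2 : preFA) : preFA :=
  @PreFA (prod (pH Q1) (pH Q2))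
         (prod (pV Q1) {ffun pH Q1 -> pV Q2})
         (fun x y => (padd x.1 y.1, padd x.2 y.2))
         (pzero Q1, pzero Q2)
         (fun vf h => (pact vf.1 h.1, pact (vf.2 h.1) h.2)).

Definition tensor {A : Type} {Q1 Q2 : preFA}
  (alpha : A -> pV Q1) (beta : prod A (pH Q1) -> pV Q2) :
  A -> pV (wreath Q1 Q2) :=
  fun a => (alpha a, [ffun h => beta (a, h)]).

(* a homomorphism from B^Delta together with its target *)
Definition stage (B : Type) : Type := {Q : preFA & B -> pV Q}.

Definition tensorS {A : finType} (st : stage A)
  (st' : stage (prod A (pH (projT1 st)))) : stage A :=
  existT _ (wreath (projT1 st) (projT1 st')) (tensor (projT2 st) (projT2 st')).

(* cascade P n st : st = beta_1 (x) ... (x) beta_n (left-nested), where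
   beta_i : (A x H_1 x ... x H_{i-1})^Delta -> (H_i,V_i) satisfies P. *)
Inductive cascade (A : finType) (P : forall B : finType, stage B -> Prop)
  : nat -> stage A -> Prop :=
| cascade1 : forall st : stage A, P A st -> cascade P 1 st
| cascadeS : forall n (st : stage A) (st' : stage (prod A (pH (projT1 st)))),
    cascade P n st -> P (prod A (pH (projT1 st)) : finType) st' ->
    cascade P n.+1 (@tensorS A st st').

Definition one_definite_FA (B : finType) (st : stage B) : Prop :=
  inhabited (fa_struct (projT1 st)) /\ definite 1 (projT2 st).

(*   H: false = 0, true = oo ;  0 + x = x, oo + x = oo                  *)
(*   V: None = 1 (identity), Some true = 0 (constant oo),               *)
(*      Some false = c_0 (constant 0)                                   *)

Definition U2 : preFA :=
  @PreFA bool (option bool) orb false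
         (fun v h => match v with None => h | Some b => b end).

Definition fpow (Q : preFA) (n : nat) : preFA :=
  @PreFA {ffun 'I_n -> pH Q} {ffun 'I_n -> pV Q}
         (fun x y => [ffun i => padd (x i) (y i)])
         [ffun _ => pzero Q]
         (fun v h => [ffun i => pact (v i) (h i)]).

(* level of type (d): the direct product of finitely many 1-definite
   homomorphisms into U_2 *)
Definition U2_level (B : finType) (st : stage B) : Prop :=
  exists (n : nat) (delta : 'I_n -> B -> pV U2),
    (forall j, definite 1 (delta j)) /\
    st = existT (fun Q : preFA => B -> pV Q) (fpow U2 n)
                (fun b => [ffun j => delta j b]).

(* Main.v *)
Require Import Defs.
From mathcomp Require Import all_boot.
Set Implicit Arguments.
Unset Strict Implicit.
Unset Printing Implicit Defensive.

Section TreeInd.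
Variables (B : Type) (P : tree B -> Prop).
Hypothesis HN : forall a ts, List.Forall P ts -> P (Node a ts).
Fixpoint tree_ind' (t : tree B) : P t :=
  match t with
  | Node a ts => HN a ((fix aux (l : seq (tree B)) : List.Forall P l :=
        match l with
        | [::] => List.Forall_nil P
        | x :: l' => @List.Forall_cons _ P x l' (tree_ind' x) (aux l')
        end) ts)
  end.
End TreeInd.

Lemma evalT_Node B Q (phi : B -> pV Q) a ts :
  evalT phi (Node a ts) = pact (phi a) (evalF phi ts).
Proof. by []. Qed.

Lemma evalF_cons B Q (phi : B -> pV Q) t ts :
  evalF phi (t :: ts) = padd (evalT phi t) (evalF phi ts).
Proof. by []. Qed.

Lemma evalF_fpow (B : Type) (Q : preFA) n (d : 'I_n -> B -> pV Q) (f : forest B) :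
  evalF (Q:=fpow Q n) (fun b => [ffun j => d j b]) f = [ffun j => evalF (d j) f].
Proof.
have HF : forall ts, List.Forall (fun t => evalT (Q:=fpow Q n) (fun b => [ffun j => d j b]) t = [ffun j => evalT (d j) t]) ts ->
   evalF (Q:=fpow Q n) (fun b => [ffun j => d j b]) ts = [ffun j => evalF (d j) ts].
  elim=> [|t ts IH] H.
    by apply/ffunP=> j; rewrite !ffunE.
  inversion H; subst.
  rewrite evalF_cons IH // H2; apply/ffunP=> j; rewrite /= !ffunE. idtac.
  by [].
apply HF.
elim: f => [|t f IH]; first by constructor.
constructor => //.
elim/tree_ind': t => a ts IHt.
rewrite evalT_Node HF //; apply/ffunP=> j; rewrite /= !ffunE.
by [].
Qed.

Section Relabel.
Variables (A : Type) (Q1 : preFA) (alpha : A -> pV Q1).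
Fixpoint relabelT (t : tree A) : tree (A * pH Q1) :=
  let: Node a ts := t in Node (a, evalF alpha ts) (map relabelT ts).
Definition relabelF (f : forest A) := map relabelT f.
End Relabel.

Lemma evalF_tensor (A : Type) (Q1 Q2 : preFA) (alpha : A -> pV Q1)
  (beta : A * pH Q1 -> pV Q2) (f : forest A) :
  evalF (tensor alpha beta) f = (evalF alpha f, evalF beta (relabelF alpha f)).
Proof.
have HF : forall ts, List.Forall (fun t => evalT (tensor alpha beta) t =
      (evalT alpha t, evalT beta (relabelT alpha t))) ts ->
   evalF (tensor alpha beta) ts = (evalF alpha ts, evalF beta (relabelF alpha ts)).
  elim=> [|t ts IH] H //.
  inversion H; subst.
  by rewrite evalF_cons IH // H2.
apply HF.
elim: f => [|t f IH]; first by constructor.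
constructor => //.
elim/tree_ind': t => a ts IHt.
rewrite evalT_Node HF //= ffunE.
by [].
Qed.

Lemma fill_hole B (s : forest B) : fill (CHole [::] [::]) s = s.
Proof. by rewrite /= cats0. Qed.

Fixpoint ext {B} (p : ctx B) (s : forest B) (a : B) (r : forest B) : ctx B :=
  match p with
  | CHole l r' => CNode (l ++ s) a (CHole [::] [::]) (r ++ r')
  | CNode l b p' r' => CNode l b (ext p' s a r) r'
  end.

Lemma fill_ext B (p : ctx B) s a r x :
  fill (ext p s a r) x = fill p (s ++ Node a x :: r).
Proof.
elim: p => [l r'|l b p' IH r'] /=; last by rewrite IH.
by rewrite cats0 -!catA.
Qed.

Lemma depth_ext B (p : ctx B) s a r : depth (ext p s a r) = (depth p).+1.
Proof. by elim: p => [l r'|l b p' IH r'] //=; rewrite IH. Qed.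

Lemma sim_refl B m (s : forest B) : sim m s s.
Proof.
elim: m s => [|m IH] s //=; split=> t Ht; exists t; split => //.
Qed.

Lemma sim_sym B m (s s' : forest B) : sim m s s' -> sim m s' s.
Proof.
elim: m s s' => [|m IH] s s' //= [H1 H2]; split.
  by move=> t Ht; have [t' [? [? ?]]] := H2 t Ht; exists t'; split => //; split => //; apply: IH.
by move=> t Ht; have [t' [? [? ?]]] := H1 t Ht; exists t'; split => //; split => //; apply: IH.
Qed.

Lemma sim_fill B m (p : ctx B) s s' : m <= depth p -> sim m (fill p s) (fill p s').
Proof.
elim: p m => [l r|l a q IH r] [|m] //= Hm.
have Hq := IH _ Hm.
split=> t Ht; move: Ht; rewrite !List.in_app_iff /= => -[Ht|[<-|Ht]].
- by exists t; split; [rewrite List.in_app_iff; left|split => //; apply: sim_refl].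
- exists (Node a (fill q s')); split; first by rewrite List.in_app_iff; right; left.
  by [].
- by exists t; split; [rewrite List.in_app_iff; right; right|split => //; apply: sim_refl].
- by exists t; split; [rewrite List.in_app_iff; left|split => //; apply: sim_refl].
- exists (Node a (fill q s)); split; first by rewrite List.in_app_iff; right; left.
  by [].
- by exists t; split; [rewrite List.in_app_iff; right; right|split => //; apply: sim_refl].
Qed.

Section AB.
Variables (A : Type) (Q : preFA) (HQ : fa_struct Q) (alpha : A -> pV Q).

Lemma evalF_cat (x y : forest A) :
  evalF alpha (x ++ y) = padd (evalF alpha x) (evalF alpha y).
Proof.
elim: x => [|t x IH]; first by rewrite /= (fadd0l HQ).
by rewrite cat_cons !evalF_cons IH (faddA HQ).
Qed.

Lemma evalF_fill_congr (p : ctx A) x y :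
  evalF alpha x = evalF alpha y -> evalF alpha (fill p x) = evalF alpha (fill p y).
Proof.
move=> Hxy; elim: p => [l r|l a q IH r] /=.
  by rewrite !evalF_cat Hxy.
by rewrite !evalF_cat !evalF_cons !evalT_Node IH.
Qed.

Lemma evalF_absorb1 t s : List.In t s ->
  padd (evalT alpha t) (evalF alpha s) = evalF alpha s.
Proof.
elim: s => [|u s IH] //= [->|Ht].
  by rewrite (faddA HQ) (faddI HQ).
by rewrite (faddA HQ) (faddC HQ (evalT alpha t)) -(faddA HQ) IH.
Qed.

Lemma absorb (p : ctx A) (s r : forest A) :
  (forall t', List.In t' r -> exists t, List.In t s /\ label t = label t' /\
     forall q : ctx A, depth p < depth q ->
       evalF alpha (fill q (kids t)) = evalF alpha (fill q (kids t'))) ->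
  evalF alpha (fill p (s ++ r)) = evalF alpha (fill p s).
Proof.
elim: r => [|t' r IH] H; first by rewrite cats0.
have [t [Hts [Hl Hq]]] := H t' (or_introl erefl).
case: t' Hl Hq H => a x /= Hl Hq H.
rewrite -fill_ext -Hq; last by rewrite depth_ext.
rewrite fill_ext -IH; last by move=> u Hu; apply: H; right.
apply: evalF_fill_congr.
have -> : Node a (kids t) = t by case: t Hl {Hts Hq} => b y /= ->.
rewrite !evalF_cat evalF_cons (faddA HQ) (faddC HQ (evalF alpha s)).
by rewrite (evalF_absorb1 Hts).
Qed.

Lemma a_to_b k : definite k alpha -> factors_through_alpha_k k alpha.
Proof.
move=> Hd.
suff H : forall m (p : ctx A) s s', k <= depth p + m -> sim m s s' ->
   evalF alpha (fill p s) = evalF alpha (fill p s').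
  by move=> s s' Hs; rewrite -(fill_hole s) -(fill_hole s'); apply: (H k).
elim=> [|m IH] p s s' Hk.
  by move=> _; apply: Hd; rewrite addn0 in Hk.
move=> /= [H1 H2].
have Hsym : forall q : ctx A, depth p < depth q -> forall x y, sim m x y ->
   evalF alpha (fill q x) = evalF alpha (fill q y).
  move=> q Hq x y Hxy; apply: IH => //.
  by apply: leq_trans Hk _; rewrite addnS -addSn leq_add2r.
rewrite -(absorb (s := s) (r := s')); last first.
  move=> t' Ht'; have [t [Ht [Hl Hs]]] := H2 t' Ht'.
  by exists t; split => //; split => // q Hq; apply: Hsym.
rewrite -(absorb (s := s') (r := s)); last first.
  move=> t Ht; have [t' [Ht' [Hl Hs]]] := H1 t Ht.
  by exists t'; split => //; split => // q Hq; symmetry; apply: Hsym.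
apply: evalF_fill_congr.
by rewrite !evalF_cat (faddC HQ).
Qed.

Lemma b_to_a k : factors_through_alpha_k k alpha -> definite k alpha.
Proof. by move=> H p Hp s s'; apply: H; apply: sim_fill. Qed.

End AB.

Definition u2comp (v w : option bool) : option bool :=
  match v with None => w | Some b => Some b end.

Definition fpowU2_struct (n : nat) : fa_struct (fpow U2 n).
Proof.
refine (@FAStruct (fpow U2 n)
  (fun u v => [ffun i => u2comp (u i) (v i)])
  [ffun _ => None]
  (fun h => [ffun i => if h i then Some true else None])
  (fun h => [ffun i => if h i then Some true else None])
  _ _ _ _ _ _ _ _ _ _ _ _ _).
- by move=> x y z; apply/ffunP=> i; rewrite /= !ffunE /= orbA.
- by move=> x; apply/ffunP=> i; rewrite /= !ffunE.
- by move=> x; apply/ffunP=> i; rewrite /= !ffunE orbF.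
- by move=> x y; apply/ffunP=> i; rewrite /= !ffunE orbC.
- by move=> x; apply/ffunP=> i; rewrite /= !ffunE orbb.
- by move=> u v w; apply/ffunP=> i; rewrite !ffunE; case: (u i).
- by move=> v; apply/ffunP=> i; rewrite !ffunE.
- by move=> v; apply/ffunP=> i; rewrite !ffunE; case: (v i).
- by move=> v w h; apply/ffunP=> i; rewrite /= !ffunE; case: (v i).
- by move=> h; apply/ffunP=> i; rewrite /= !ffunE.
- move=> v w H; apply/ffunP=> i.
  have H0 := congr1 (fun f : {ffun 'I_n -> bool} => f i) (H [ffun _ => false]).
  have H1 := congr1 (fun f : {ffun 'I_n -> bool} => f i) (H [ffun _ => true]).
  move: H0 H1; rewrite /= !ffunE.
  by case: (v i) => [[]|]; case: (w i) => [[]|].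
- by move=> h g; apply/ffunP=> i; rewrite /= !ffunE; case: (h i).
- by move=> h g; apply/ffunP=> i; rewrite /= !ffunE; case: (h i); rewrite ?orbT ?orbF.
Defined.

Lemma U2_to_one (B : finType) (st : stage B) : U2_level st -> one_definite_FA st.
Proof.
move=> [n [delta [Hd ->]]]; split; first by constructor; exact: fpowU2_struct.
move=> p Hp s s' /=; rewrite !evalF_fpow; apply/ffunP=> j; rewrite !ffunE.
exact: Hd.
Qed.

Lemma cascade_mono (A : finType) (P P' : forall B : finType, stage B -> Prop) n (st : stage A) :
  (forall B st, P B st -> P' B st) -> cascade P n st -> cascade P' n st.
Proof.
move=> HP; elim=> [st0 H|m st0 st1 _ IH H]; first by constructor; apply: HP.
by constructor => //; apply: HP.
Qed.

Lemma tensor_definite (A : Type) (Q1 Q2 : preFA) (alpha : A -> pV Q1)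
  (beta : A * pH Q1 -> pV Q2) n :
  definite n alpha -> definite 1 beta -> definite n.+1 (tensor alpha beta).
Proof.
move=> Ha Hb p Hp s s'; rewrite !evalF_tensor.
have Ha' := Ha p (ltnW Hp) s s'.
case: p Hp Ha' => [l r|l a q r] //= Hq Ha'.
rewrite Ha'; congr pair.
rewrite /relabelF !map_cat /=.
have -> : evalF alpha (fill q s) = evalF alpha (fill q s') by apply: Ha.
set c := CNode (map (relabelT alpha) l) (a, evalF alpha (fill q s'))
            (CHole [::] [::]) (map (relabelT alpha) r).
have E : forall x, map (relabelT alpha) l ++
   Node (a, evalF alpha (fill q s')) (map (relabelT alpha) (fill q x))
     :: map (relabelT alpha) r = fill c (map (relabelT alpha) (fill q x)).
  by move=> x; rewrite /c /= cats0.
by rewrite !E; apply: Hb.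
Qed.

Lemma cascade_definite (A : finType) (P : forall B : finType, stage B -> Prop) n (st : stage A) :
  (forall B st, P B st -> definite 1 (projT2 st)) ->
  cascade P n st -> definite n (projT2 st).
Proof.
move=> HP; elim=> [st0 H|m st0 st1 _ IH H]; first exact: HP H.
by apply: tensor_definite => //; apply: HP H.
Qed.

Definition rdelta (B : finType) (j : 'I_#|B|) (b : B) : option bool :=
  if b == enum_val j then Some true else Some false.

Definition rootset (B : finType) : stage B :=
  existT (fun Q : preFA => B -> pV Q) (fpow U2 #|B|) (fun b => [ffun j => rdelta j b]).

Lemma evalF_rdelta (B : finType) j (f : forest B) :
  evalF (Q:=U2) (rdelta j) f = has (fun t => label t == enum_val j) f.
Proof.
elim: f => [|[b ts] f IH] //.
by rewrite evalF_cons IH evalT_Node /= /rdelta; case: (b == enum_val j).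
Qed.

Lemma rdelta_def1 (B : finType) j : definite 1 (Q:=U2) (@rdelta B j).
Proof.
move=> [l r|l a q r] //= _ s s'.
by rewrite !evalF_rdelta !has_cat /=.
Qed.

Lemma has_In T (p : pred T) (f : seq T) : has p f -> exists t, List.In t f /\ p t.
Proof.
elim: f => [|x f IH] //= /orP [Hx|Hf]; first by exists x; split => //; left.
by have [t [Ht Hp]] := IH Hf; exists t; split => //; right.
Qed.

Lemma In_has T (p : pred T) (f : seq T) t : List.In t f -> p t -> has p f.
Proof.
elim: f => [|x f IH] //= [->|Hf] Hp; first by rewrite Hp.
by rewrite IH ?orbT.
Qed.

Lemma rootset_sim (B : finType) (f f' : forest B) :
  evalF (projT2 (rootset B)) f = evalF (projT2 (rootset B)) f' ->
  forall t, List.In t f -> exists t', List.In t' f' /\ label t = label t'.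
Proof.
rewrite /= !evalF_fpow => E t Ht.
have := congr1 (fun g : {ffun 'I_#|B| -> bool} => g (enum_rank (label t))) E.
rewrite !ffunE !evalF_rdelta enum_rankK.
rewrite (In_has (p := fun u => label u == label t) Ht) //.
move=> /esym /has_In [t' [Ht' /eqP Hl]].
by exists t'.
Qed.

Lemma rootset_U2 (B : finType) : U2_level (rootset B).
Proof.
exists #|B|, (@rdelta B); split => //.
exact: rdelta_def1.
Qed.

Fixpoint build (A : finType) (m : nat) : stage A :=
  match m with
  | 0 => rootset A
  | m'.+1 => @tensorS A (build A m') (rootset (prod A (pH (projT1 (build A m')))))
  end.

Lemma build_cascade (A : finType) m : cascade U2_level m.+1 (build A m).
Proof.
elim: m => [|m IH]; first by constructor; apply: rootset_U2.
by apply: cascadeS => //; apply: rootset_U2.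
Qed.

Lemma build_sim (A : finType) m (s s' : forest A) :
  evalF (projT2 (build A m)) s = evalF (projT2 (build A m)) s' -> sim m.+1 s s'.
Proof.
elim: m s s' => [|m IH] s s' E.
  by split => t Ht; [have [t' [Ht' Hl]] := rootset_sim E Ht | have [t' [Ht' Hl]] := rootset_sim (esym E) Ht];
     exists t'; split.
move: E; rewrite /= !evalF_tensor => -[_ E].
have key : forall f f', evalF (projT2 (rootset (prod A (pH (projT1 (build A m))))))
     (relabelF (projT2 (build A m)) f) =
     evalF (projT2 (rootset (prod A (pH (projT1 (build A m))))))
     (relabelF (projT2 (build A m)) f') ->
   forall t, List.In t f -> exists t', List.In t' f' /\ label t = label t' /\
       sim m.+1 (kids t) (kids t').
  move=> f f' Ef t Ht.
  have [u [Hu Hl]] := rootset_sim Ef (List.in_map (relabelT (projT2 (build A m))) _ _ Ht).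
  move: Hu => /List.in_map_iff [t' [Ht'u Ht']]; subst u.
  exists t'; split => //.
  case: t t' Ht Ht' Hl => [a ts] [a' ts'] _ _ /= [-> Hk]; split => //.
  exact: IH.
split => t Ht; first exact: (key s s').
have [t' [H1 [H2 H3]]] := key s' s (esym E) t Ht.
by exists t'; split => //; split; [rewrite H2 | exact: (sim_sym H3)].
Qed.

Lemma fac_definite (A : Type) (Q R : preFA) (alpha : A -> pV Q) (beta : A -> pV R) k :
  factors_through alpha beta -> definite k beta -> definite k alpha.
Proof. by move=> Hf Hd p Hp s s'; apply: Hf; apply: Hd. Qed.

Theorem theorem2 (A : finType) (Q : preFA) (HQ : fa_struct Q)
  (alpha : A -> pV Q) (k : nat) :
  onto_hom alpha HQ -> 0 < k ->
  [<-> definite k alpha;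
       factors_through_alpha_k k alpha;
       exists st : stage A, cascade one_definite_FA k st /\
                            factors_through alpha (projT2 st);
       exists st : stage A, cascade U2_level k st /\
                            factors_through alpha (projT2 st)].
Proof.
move=> _ Hk.
have ab := @a_to_b A Q HQ alpha k.
have ba := @b_to_a A Q alpha k.
have bd : factors_through_alpha_k k alpha -> exists st : stage A,
    cascade U2_level k st /\ factors_through alpha (projT2 st).
  case: k Hk {ab ba} => // k' _ Hb.
  exists (build A k'); split; first exact: build_cascade.
  by move=> s s' E; apply: Hb; apply: build_sim.
have dc : (exists st : stage A, cascade U2_level k st /\ factors_through alpha (projT2 st)) ->
    exists st : stage A, cascade one_definite_FA k st /\ factors_through alpha (projT2 st).
  move=> [st [Hc Hf]]; exists st; split => //.
  by apply: cascade_mono Hc => B st0; apply: U2_to_one.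
have ca : (exists st : stage A, cascade one_definite_FA k st /\ factors_through alpha (projT2 st)) ->
    definite k alpha.
  move=> [st [Hc Hf]]; apply: fac_definite Hf _.
  by apply: cascade_definite Hc => B st0 [].
tfae => H.
- exact: ab.
- exact: dc (bd H).
- exact: bd (ab (ca H)).
- exact: ca (dc H).
Qed.
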